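(* Let $\tilde G=(\mathbf H\oplus\mathbf V,\ast)$ be the Lie group defined below, with Lie algebra $\mathfrak g$, and let $\delta:\mathfrak g\to\mathfrak g\wedge\mathfrak g$ be a 1-cocycle making $(\mathfrak g,\delta)$ a Lie bialgebra. Suppose that in the dual Lie algebra $\mathfrak g^*=\mathbf H^*\oplus\mathbf V^*$ (with bracket $\delta^*$) the subspace $\mathbf H^*$ is an abelian subalgebra. Then for the (unique) Poisson–Lie structure on $\tilde G$ whose linearization at the identity is $\delta$, one has $\{h^i,h^j\}=0$ identically on all of $\tilde G$, for all $i,j$, where $h^i$ are the linear coordinate functions on $\tilde G$ coming from a basis of $\mathbf H^*$.
   Context: $\mathbf H$ and $\mathbf V$ are finite-dimensional real vector spaces; $\mathbf H$ is regarded as a commutative Lie group under addition. $\rho_1,\rho_2:\mathbf H\to GL(\mathbf V)$ are two representations (group homomorphisms) whose images commute with each other. $\tilde G$ is the set $\mathbf H\oplus\mathbf V$ with the group law $(h,v)\ast(h',v')=(h+h',\ \rho_1(h)v'+\rho_2(h')^{-1}v)$; its unit is $(0,0)$ and $(h,v)^{-1}=(-h,-\rho_1(-h)\rho_2(h)v)$. Since $\tilde G$ is diffeomorphic to a vector space (connected and simply connected), every Lie bialgebra structure $\delta$ on its Lie algebra integrates to a unique Poisson–Lie structure on $\tilde G$ whose linearization at the identity is $\delta$. The linear functions $h^i$ (from $\mathbf H^*$) and $v^m$ (from $\mathbf V^*$) are the coordinate functions on $\tilde G$. *)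

(* Defs.v *)
From HB Require Import structures.
From mathcomp Require Import all_boot all_order all_algebra.
From mathcomp Require Import all_classical all_reals all_analysis.
Set Implicit Arguments. Unset Strict Implicit. Unset Printing Implicit Defensive.
Import Order.TTheory GRing.Theory Num.Theory.
Import numFieldNormedType.Exports.
Local Open Scope ring_scope.

Fixpoint Ck (R : realType) (V W : normedModType R) (k : nat) (f : V -> W) : Prop :=
  match k with
  | 0 => forall x, differentiable f x
  | k.+1 => (forall x, differentiable f x) /\ forall v : V, Ck k ('D_v f)
  end.
Definition smooth (R : realType) (V W : normedModType R) (f : V -> W) : Prop :=
  forall k, Ck k f.

(* A point x : 'cV_(n+m) is the pair (usubmx x, dsubmx x) in H (+) V,
   with H = 'cV_n and V = 'cV_m.  The unit is 0. *)
Section Group.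
Variables (R : realType) (n m : nat).
Variables (rho1 rho2 : 'cV[R]_n -> 'M[R]_m).

Definition gmul (x y : 'cV[R]_(n + m)) : 'cV[R]_(n + m) :=
  col_mx (usubmx x + usubmx y)
         (rho1 (usubmx x) *m dsubmx y + invmx (rho2 (usubmx y)) *m dsubmx x).
End Group.

Definition is_rep (R : realType) (n m : nat) (rho : 'cV[R]_n -> 'M[R]_m) : Prop :=
  [/\ forall h, rho h \in unitmx,
      rho 0 = 1%:M,
      forall h h', rho (h + h') = rho h *m rho h'
    & smooth rho].

Definition evec (R : realType) (N : nat) (k : 'I_N) : 'cV[R]_N := delta_mx k 0.
Arguments evec {R N} k.

Definition jac (R : realType) (N : nat) (F : 'cV[R]_N -> 'cV[R]_N) (x : 'cV[R]_N)
  : 'M[R]_N := \matrix_(i, j) ('D_(evec j) F x) i 0.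

Definition pbr (R : realType) (N : nat) (pi : 'cV[R]_N -> 'M[R]_N)
  (f g : 'cV[R]_N -> R) : 'cV[R]_N -> R :=
  fun x => \sum_(k < N) \sum_(l < N) 'D_(evec k) f x * pi x k l * 'D_(evec l) g x.

Definition poisson_bivector (R : realType) (N : nat) (pi : 'cV[R]_N -> 'M[R]_N) : Prop :=
  [/\ smooth pi,
      forall x, (pi x)^T = - pi x
    & forall f g k : 'cV[R]_N -> R, smooth f -> smooth g -> smooth k ->
        forall x, pbr pi f (pbr pi g k) x + pbr pi g (pbr pi k f) x
                  + pbr pi k (pbr pi f g) x = 0].

(* multiplicativity: pi(xy) = (L_x)_* pi(y) + (R_y)_* pi(x) *)
Definition pl_multiplicative (R : realType) (N : nat) (mul : 'cV[R]_N -> 'cV[R]_N -> 'cV[R]_N)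
  (pi : 'cV[R]_N -> 'M[R]_N) : Prop :=
  forall x y,
    pi (mul x y) = jac (mul x) y *m pi y *m (jac (mul x) y)^T
                 + jac (mul^~ y) x *m pi x *m (jac (mul^~ y) x)^T.

(* Lie bracket on g = T_0 G (coordinates centred at the unit 0):
   [X,Y] = B(X,Y) - B(Y,X),  B = mixed second derivative of mul at (0,0). *)
Definition mixed2 (R : realType) (N : nat) (mul : 'cV[R]_N -> 'cV[R]_N -> 'cV[R]_N)
  (X Y : 'cV[R]_N) : 'cV[R]_N :=
  'D_X (fun x => 'D_Y (fun y => mul x y) 0) 0.
Definition liebr (R : realType) (N : nat) (mul : 'cV[R]_N -> 'cV[R]_N -> 'cV[R]_N)
  (X Y : 'cV[R]_N) : 'cV[R]_N := mixed2 mul X Y - mixed2 mul Y X.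

Definition admx (R : realType) (N : nat) (mul : 'cV[R]_N -> 'cV[R]_N -> 'cV[R]_N)
  (X : 'cV[R]_N) : 'M[R]_N := \matrix_(i, j) (liebr mul X (evec j)) i 0.

(* bivectors (elements of g /\ g) are skew matrices; ad_X P = M_X P + P M_X^T *)
Definition cocycle (R : realType) (N : nat) (mul : 'cV[R]_N -> 'cV[R]_N -> 'cV[R]_N)
  (delta : 'cV[R]_N -> 'M[R]_N) : Prop :=
  forall X Y, delta (liebr mul X Y) =
      admx mul X *m delta Y + delta Y *m (admx mul X)^T
    - (admx mul Y *m delta X + delta X *m (admx mul Y)^T).

(* the dual bracket delta^* on g^* (covectors = row vectors):
   [xi,eta](Z) = <xi (x) eta, delta(Z)> *)
Definition cobr (R : realType) (N : nat) (delta : 'cV[R]_N -> 'M[R]_N)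
  (xi eta : 'rV[R]_N) : 'rV[R]_N :=
  \row_k (xi *m delta (evec k) *m eta^T) 0 0.

Definition lie_bialgebra (R : realType) (N : nat)
  (mul : 'cV[R]_N -> 'cV[R]_N -> 'cV[R]_N) (delta : 'cV[R]_N -> 'M[R]_N) : Prop :=
  [/\ forall (a : R) X Y, delta (a *: X + Y) = a *: delta X + delta Y,
      forall X, (delta X)^T = - delta X,
      cocycle mul delta
    & forall xi eta zeta,
        cobr delta (cobr delta xi eta) zeta + cobr delta (cobr delta eta zeta) xi
        + cobr delta (cobr delta zeta xi) eta = 0].

(* H^* inside g^* = H^* (+) V^* : covectors vanishing on V *)
Definition Hcovec (R : realType) (n m : nat) (xi : 'rV[R]_n) : 'rV[R]_(n + m) :=
  row_mx xi 0.

Definition hcoord (R : realType) (n m : nat) (xi : 'rV[R]_n) (x : 'cV[R]_(n + m)) : R :=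
  (xi *m usubmx x) 0 0.

(* Main.v *)
Require Import Defs.
From HB Require Import structures.
From mathcomp Require Import all_boot all_order all_algebra.
From mathcomp Require Import all_classical all_reals all_analysis.
Import Order.TTheory GRing.Theory Num.Theory.
Import numFieldNormedType.Exports.
Local Open Scope ring_scope.
Local Open Scope classical_set_scope.

Lemma additive_zero (R : realType) (psi : R -> R) :
  (forall s t, psi (s + t) = psi s + psi t) ->
  (fun h => h^-1 * psi h) @ 0^' --> 0 -> psi 1 = 0.
Proof.
move=> add cv.
have psi0 : psi 0 = 0.
  by have := add 0 0; rewrite addr0 => /eqP; rewrite -subr_eq0 opprD addrA subrr sub0r oppr_eq0 => /eqP.
have psiN : forall k s, psi (k%:R * s) = k%:R * psi s.
  elim=> [|k IH] s; first by rewrite !mul0r psi0.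
  by rewrite -addn1 !natrD !mulrDl !mul1r add IH.
apply/eqP/negPn/negP => c0.
have /(cvgr0Pnorm_lt _).1 := cv.
move=> /(_ `|psi 1|); rewrite normr_gt0 c0 => /(_ isT).
move=> /nbhs_ballP[e /= e0 He].
pose N := Num.Def.trunc (e^-1).
pose s : R := (N.+1%:R)^-1.
have sn0 : s != 0 by rewrite invr_eq0 pnatr_eq0.
have : ball 0 e s.
  rewrite /ball /= sub0r normrN ger0_norm; last by rewrite invr_ge0.
  rewrite -[e]invrK ltf_pV2 ?posrE ?invr_gt0 //.
  exact: truncnS_gt.
move=> /He /(_ sn0) /=.
have -> : s^-1 * psi s = psi 1.
  by rewrite -[in RHS](@divff _ (N.+1%:R)) ?pnatr_eq0 // psiN invrK.
by rewrite ltxx.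
Qed.

Lemma derivable_lincomp (R : realType) (U V W : normedModType R)
  (f : U -> W) (L : V -> U) a v :
  (forall h : R, L (h *: v + a) = h *: L v + L a) ->
  derivable f (L a) (L v) -> derivable (f \o L) a v.
Proof.
move=> HL; rewrite /derivable.
have -> : (fun h : R => h^-1 *: ((f \o L \o shift a) (h *: v) - (f \o L) a))
  = (fun h : R => h^-1 *: ((f \o shift (L a)) (h *: L v) - f (L a))).
  by apply/funext => h /=; rewrite HL.
by [].
Qed.

Lemma coord_derive (R : realType) (V : normedModType R) p q
  (L : V -> 'M[R]_(p, q)) (HL : forall (h : R) x y, L (h *: x + y) = h *: L x + L y)
  a b y v :
  derivable (fun t => L t a b) y v /\ 'D_v (fun t => L t a b) y = L v a b.
Proof.
have dL : derivable L y v.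
  apply/cvg_ex; exists (L v); apply: cvg_near_cst; near=> h.
  rewrite /= HL addrK scalerA mulVf ?scale1r //; near: h.
  exact: nbhs_dnbhs_neq.
split; first exact: (derivable_mxP L y v).1.
have := derive_mx dL => /(congr1 (fun M : 'M[R]_(p, q) => M a b)); rewrite mxE => <-.
suff -> : 'D_v L y = L v by [].
apply: cvg_lim => //; apply: cvg_near_cst; near=> h.
rewrite /= HL addrK scalerA mulVf ?scale1r //; near: h.
exact: nbhs_dnbhs_neq.
Unshelve. all: by end_near. Qed.

Lemma rep_inv (R : realType) n m (rho : 'cV[R]_n -> 'M[R]_m) (rep : is_rep rho) h :
  invmx (rho h) = rho (- h).
Proof.
case: rep => U r0 rM _.
have : rho h *m rho (- h) = 1%:M by rewrite -rM subrr r0.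
move=> /(congr1 (mulmx (invmx (rho h)))); rewrite mulKmx ?U // => ->.
by rewrite mulmx1.
Qed.

Lemma rep_diff (R : realType) n m (rho : 'cV[R]_n -> 'M[R]_m) (rep : is_rep rho) a v :
  derivable rho a v.
Proof. case: rep => _ _ _ sm; apply: diff_derivable; exact: (sm 0%N). Qed.

Lemma derivable_sumf (R : realType) (V : normedModType R) N (f : 'I_N -> V -> R) y v :
  (forall k, derivable (f k) y v) -> derivable (fun t => \sum_k f k t) y v.
Proof. by move=> H; rewrite -fct_sumE; apply: derivable_sum. Qed.

Lemma derivable_mull (R : realType) (V : normedModType R) (f : V -> R) c y v :
  derivable f y v -> derivable (fun t => c * f t) y v.
Proof. by move=> H; have := @derivableZ R V R f c y v H. Qed.

Lemma derivable_mulr (R : realType) (V : normedModType R) (f : V -> R) c y v :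
  derivable f y v -> derivable (fun t => f t * c) y v.
Proof.
move=> H; have -> : (fun t => f t * c) = (fun t => c * f t).
  by apply/funext => t; rewrite mulrC.
exact: derivable_mull.
Qed.

Lemma derivable_addf (R : realType) (V : normedModType R) (f g : V -> R) y v :
  derivable f y v -> derivable g y v -> derivable (fun t => f t + g t) y v.
Proof. by move=> Hf Hg; have := derivableD Hf Hg. Qed.

Lemma derivable_cstf (R : realType) (V : normedModType R) (c : R) y v :
  derivable (fun t : V => c) y v.
Proof. exact: (derivable_cst c). Qed.

Lemma usub_lin (R : realType) n m (h : R) (x y : 'cV[R]_(n + m)) :
  usubmx (h *: x + y) = h *: usubmx x + usubmx y.
Proof. by apply/matrixP => i j; rewrite !mxE. Qed.
Lemma dsub_lin (R : realType) n m (h : R) (x y : 'cV[R]_(n + m)) :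
  dsubmx (h *: x + y) = h *: dsubmx x + dsubmx y.
Proof. by apply/matrixP => i j; rewrite !mxE. Qed.
Lemma nusub_lin (R : realType) n m (h : R) (x y : 'cV[R]_(n + m)) :
  - usubmx (h *: x + y) = h *: (- usubmx x) + - usubmx y.
Proof. by apply/matrixP => i j; rewrite !mxE opprD mulrN. Qed.

Lemma coordv (R : realType) p q (a : 'I_p) (b : 'I_q) (y v : 'M[R]_(p, q)) :
  derivable (fun t : 'M[R]_(p,q) => t a b) y v /\ 'D_v (fun t : 'M[R]_(p,q) => t a b) y = v a b.
Proof. by apply: (@coord_derive R _ p q id). Qed.

Lemma rep_comp_diff (R : realType) n m (rho : 'cV[R]_n -> 'M[R]_m) (rep : is_rep rho)
  (y v : 'cV[R]_(n + m)) k l :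
  derivable (fun t => rho (- usubmx t) k l) y v.
Proof.
apply: (derivable_mxP (fun t => rho (- usubmx t)) y v).1.
apply: (@derivable_lincomp R _ _ _ _ (fun t : 'cV[R]_(n + m) => - usubmx t)).
  by move=> h; rewrite nusub_lin.
exact: rep_diff.
Qed.

Lemma rep_comp_diff' (R : realType) n m (rho : 'cV[R]_n -> 'M[R]_m) (rep : is_rep rho)
  (y v : 'cV[R]_(n + m)) k l :
  derivable (fun t => rho (usubmx t) k l) y v.
Proof.
apply: (derivable_mxP (fun t => rho (usubmx t)) y v).1.
apply: (@derivable_lincomp R _ _ _ _ (fun t : 'cV[R]_(n + m) => usubmx t)).
  by move=> h; rewrite usub_lin.
exact: rep_diff.
Qed.

Lemma gmulE (R : realType) n m (rho1 rho2 : 'cV[R]_n -> 'M[R]_m) (rep2 : is_rep rho2) x y :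
  gmul rho1 rho2 x y = col_mx (usubmx x + usubmx y)
    (rho1 (usubmx x) *m dsubmx y + rho2 (- usubmx y) *m dsubmx x).
Proof. by rewrite /gmul rep_inv. Qed.

Lemma dcoord_c (R : realType) n m (a : 'I_(n + m)) (y v : 'cV[R]_(n + m)) :
  derivable (fun t : 'cV[R]_(n + m) => t a 0) y v.
Proof. exact: (@coordv R _ _ a 0 y v).1. Qed.

Lemma derivable_gmul_r (R : realType) n m (rho1 rho2 : 'cV[R]_n -> 'M[R]_m)
  (rep2 : is_rep rho2) x y v : derivable (gmul rho1 rho2 x) y v.
Proof.
rewrite (_ : gmul rho1 rho2 x = fun t => col_mx (usubmx x + usubmx t)
    (rho1 (usubmx x) *m dsubmx t + rho2 (- usubmx t) *m dsubmx x)); last first.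
  by apply/funext => t; rewrite gmulE.
apply/derivable_mxP => a b; rewrite (ord1 b).
case: (split_ordP a) => [i ->|l ->].
- under [X in derivable X]funext => t do rewrite col_mxEu !mxE.
  apply: derivable_addf; first exact: derivable_cstf.
  exact: dcoord_c.
- under [X in derivable X]funext => t do rewrite col_mxEd !mxE.
  apply: derivable_addf; apply: derivable_sumf => k.
  + apply: derivable_mull. under [X in derivable X]funext => t do rewrite mxE.
    exact: dcoord_c.
  + apply: derivable_mulr; exact: rep_comp_diff.
Qed.

Lemma derivable_gmul_l (R : realType) n m (rho1 rho2 : 'cV[R]_n -> 'M[R]_m)
  (rep1 : is_rep rho1) (rep2 : is_rep rho2) x y v :
  derivable (fun t => gmul rho1 rho2 t y) x v.
Proof.
rewrite (_ : (fun t => gmul rho1 rho2 t y) = fun t => col_mx (usubmx t + usubmx y)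
    (rho1 (usubmx t) *m dsubmx y + rho2 (- usubmx y) *m dsubmx t)); last first.
  by apply/funext => t; rewrite gmulE.
apply/derivable_mxP => a b; rewrite (ord1 b).
case: (split_ordP a) => [i ->|l ->].
- under [X in derivable X]funext => t do rewrite col_mxEu !mxE.
  apply: derivable_addf; last exact: derivable_cstf.
  exact: dcoord_c.
- under [X in derivable X]funext => t do rewrite col_mxEd !mxE.
  apply: derivable_addf; apply: derivable_sumf => k.
  + apply: derivable_mulr; exact: rep_comp_diff'.
  + apply: derivable_mull. under [X in derivable X]funext => t do rewrite mxE.
    exact: dcoord_c.
Qed.

Lemma derive_cplus (R : realType) n m (c : R) (a : 'I_(n + m)) (y v : 'cV[R]_(n + m)) :
  'D_v (fun t : 'cV[R]_(n + m) => c + t a 0) y = v a 0.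
Proof.
have := @deriveD R _ R (cst c) (fun t : 'cV[R]_(n + m) => t a 0) y v
  (derivable_cst _ _ _) (@coordv R _ _ a 0 y v).1.
move=> /= ->; rewrite derive_cst add0r; exact: (@coordv R _ _ a 0 y v).2.
Qed.

Lemma derive_plusc (R : realType) n m (c : R) (a : 'I_(n + m)) (y v : 'cV[R]_(n + m)) :
  'D_v (fun t : 'cV[R]_(n + m) => t a 0 + c) y = v a 0.
Proof.
rewrite (_ : (fun t : 'cV[R]_(n + m) => t a 0 + c) = (fun t => c + t a 0)).
  exact: derive_cplus.
by apply/funext => t; rewrite addrC.
Qed.

Lemma jac_r_up (R : realType) n m (rho1 rho2 : 'cV[R]_n -> 'M[R]_m)
  (rep2 : is_rep rho2) x y (i : 'I_n) k :
  jac (gmul rho1 rho2 x) y (lshift m i) k = (lshift m i == k)%:R.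
Proof.
rewrite /jac mxE (derive_mx (@derivable_gmul_r R n m rho1 rho2 rep2 x y (evec k))) mxE.
under [X in derive X]funext => t do rewrite /gmul col_mxEu !mxE.
by rewrite derive_cplus /evec mxE eqxx andbT eq_sym.
Qed.

Lemma jac_l_up (R : realType) n m (rho1 rho2 : 'cV[R]_n -> 'M[R]_m)
  (rep1 : is_rep rho1) (rep2 : is_rep rho2) x y (i : 'I_n) k :
  jac (fun t => gmul rho1 rho2 t y) x (lshift m i) k = (lshift m i == k)%:R.
Proof.
rewrite /jac mxE (derive_mx (@derivable_gmul_l R n m rho1 rho2 rep1 rep2 x y (evec k))) mxE.
under [X in derive X]funext => t do rewrite /gmul col_mxEu !mxE.
by rewrite derive_plusc /evec mxE eqxx andbT eq_sym.
Qed.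

Lemma sandwich_entry (R : realType) p N (J : 'M[R]_(p, N)) (P : 'M[R]_N) a b c d :
  (forall k, J a k = (c == k)%:R) -> (forall k, J b k = (d == k)%:R) ->
  (J *m P *m J^T) a b = P c d.
Proof.
move=> Ha Hb; rewrite mxE (bigD1 d) //= big1 => [|l /negbTE lb]; last first.
  by rewrite !mxE Hb eq_sym lb mulr0.
rewrite !mxE Hb eqxx mulr1 addr0 (bigD1 c) //= big1 => [|k /negbTE ka].
  by rewrite Ha eqxx mul1r addr0.
by rewrite Ha eq_sym ka mul0r.
Qed.

Lemma pi_add (R : realType) n m (rho1 rho2 : 'cV[R]_n -> 'M[R]_m)
  (rep1 : is_rep rho1) (rep2 : is_rep rho2) (pi : 'cV[R]_(n + m) -> 'M[R]_(n + m))
  (Hmult : pl_multiplicative (gmul rho1 rho2) pi) x y (i j : 'I_n) :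
  pi (gmul rho1 rho2 x y) (lshift m i) (lshift m j)
  = pi y (lshift m i) (lshift m j) + pi x (lshift m i) (lshift m j).
Proof.
have r1 := fun k => @jac_r_up R n m rho1 rho2 rep2 x y i k.
have r2 := fun k => @jac_r_up R n m rho1 rho2 rep2 x y j k.
have l1 := fun k => @jac_l_up R n m rho1 rho2 rep1 rep2 x y i k.
have l2 := fun k => @jac_l_up R n m rho1 rho2 rep1 rep2 x y j k.
rewrite (Hmult x y).
set J1 := jac _ y. set J2 := jac _ x.
rewrite [in LHS]mxE.
have E := @sandwich_entry R (n + m) (n + m) J1 (pi y) (lshift m i) (lshift m j) (lshift m i) (lshift m j) r1 r2.
have E2 := @sandwich_entry R (n + m) (n + m) J2 (pi x) (lshift m i) (lshift m j) (lshift m i) (lshift m j) l1 l2.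
rewrite -E -E2 addrC.
by [].
Qed.

Lemma sandwich2 (R : realType) N (u w : 'rV[R]_N) (P : 'M[R]_N) c d :
  (forall k, u 0 k = (c == k)%:R) -> (forall k, w 0 k = (d == k)%:R) ->
  (u *m P *m w^T) 0 0 = P c d.
Proof.
move=> Ha Hb; rewrite mxE (bigD1 d) //= big1 => [|l /negbTE lb]; last first.
  by rewrite !mxE Hb eq_sym lb mulr0.
rewrite !mxE Hb eqxx mulr1 addr0 (bigD1 c) //= big1 => [|k /negbTE ka].
  by rewrite Ha eqxx mul1r addr0.
by rewrite Ha eq_sym ka mul0r.
Qed.

Lemma delta_ul (R : realType) n m (delta : 'cV[R]_(n + m) -> 'M[R]_(n + m))
  (dlin : forall (a : R) X Y, delta (a *: X + Y) = a *: delta X + delta Y)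
  (Habelian : forall xi eta : 'rV[R]_n,
      cobr delta (Hcovec m xi) (Hcovec m eta) = 0) (i j : 'I_n) z :
  delta z (lshift m i) (lshift m j) = 0.
Proof.
have d0 : delta 0 = 0.
  have := dlin 1 0 0; rewrite scaler0 addr0 scale1r => /eqP.
  by rewrite -subr_eq0 opprD addrA subrr sub0r oppr_eq0 => /eqP.
have hc : forall (c : 'I_n) (l : 'I_(n + m)), (@Hcovec R n m (delta_mx 0 c)) 0 l = (lshift m c == l)%:R.
  move=> c l; rewrite /Hcovec.
  case: (split_ordP l) => [l' ->|l' ->].
    by rewrite row_mxEl mxE eq_lshift eq_sym.
  by rewrite row_mxEr mxE eq_lrshift.
have dk : forall k, delta (evec k) (lshift m i) (lshift m j) = 0.
  move=> k; have := Habelian (delta_mx 0 i) (delta_mx 0 j).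
  move=> /(congr1 (fun M : 'rV[R]_(n + m) => M 0 k)).
  rewrite /cobr /= mxE [in RHS]mxE.
  have E := @sandwich2 R (n + m) (@Hcovec R n m (delta_mx 0 i))
     (@Hcovec R n m (delta_mx 0 j)) (delta (evec k))
     (lshift m i) (lshift m j) (hc i) (hc j).
  by rewrite E.
rewrite (matrix_sum_delta z).
elim/big_ind: _ => [|X Y HX HY|k _]; first by rewrite d0 mxE.
  by move: (dlin 1 X Y); rewrite scale1r => ->; rewrite !mxE HX HY mulr0 addr0.
rewrite big_ord1.
by move: (dlin (z k 0) (delta_mx k 0) 0); rewrite addr0 => ->;
  rewrite d0 addr0 !mxE -/(evec k) dk mulr0.
Qed.

Lemma piHH (R : realType) n m (rho1 rho2 : 'cV[R]_n -> 'M[R]_m)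
  (rep1 : is_rep rho1) (rep2 : is_rep rho2)
  (delta : 'cV[R]_(n + m) -> 'M[R]_(n + m))
  (dlin : forall (a : R) X Y, delta (a *: X + Y) = a *: delta X + delta Y)
  (Habelian : forall xi eta : 'rV[R]_n,
      cobr delta (Hcovec m xi) (Hcovec m eta) = 0)
  (pi : 'cV[R]_(n + m) -> 'M[R]_(n + m))
  (spi : smooth pi)
  (Hmult : pl_multiplicative (gmul rho1 rho2) pi)
  (Hlin : forall X, 'D_X pi 0 = delta X) x (i j : 'I_n) :
  pi x (lshift m i) (lshift m j) = 0.
Proof.
pose F x := pi x (lshift m i) (lshift m j).
have Fadd : forall x y, F (gmul rho1 rho2 x y) = F y + F x.
  by move=> x' y'; rewrite /F (@pi_add R n m rho1 rho2 rep1 rep2 pi Hmult).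
have F0 : F 0 = 0.
  have g00 : gmul rho1 rho2 0 0 = 0.
    have u0 : usubmx (0 : 'cV[R]_(n + m)) = 0 by apply/matrixP => ? ?; rewrite !mxE.
    have d0 : dsubmx (0 : 'cV[R]_(n + m)) = 0 by apply/matrixP => ? ?; rewrite !mxE.
    by rewrite /gmul u0 d0 !mulmx0 !addr0 col_mx0.
  move: (Fadd 0 0); rewrite g00 => /eqP.
  by rewrite -subr_eq0 opprD addrA subrr sub0r oppr_eq0 => /eqP.
have line : forall z, (forall s t : R, gmul rho1 rho2 (s *: z) (t *: z) = (s + t) *: z) ->
    F z = 0.
  move=> z Hz.
  pose psi := fun t : R => F (t *: z).
  have padd : forall s t, psi (s + t) = psi s + psi t.
    by move=> s t; rewrite /psi -Hz Fadd addrC.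
  have dpi : derivable pi 0 z by apply: diff_derivable; exact: (spi 0%N).
  have dF : derivable (fun t => pi t (lshift m i) (lshift m j)) 0 z.
    exact: (derivable_mxP pi 0 z).1.
  have DF : 'D_z (fun t => pi t (lshift m i) (lshift m j)) 0 = 0.
    have := derive_mx dpi => /(congr1 (fun M : 'M[R]_(n + m) => M (lshift m i) (lshift m j))).
    rewrite mxE => <-; rewrite Hlin.
    exact: (@delta_ul R n m delta dlin Habelian i j z).
  have Q : (fun h : R => h^-1 * psi h) @ 0^' --> 0.
    have dF' : (fun h : R => h^-1 *: (((fun t => pi t (lshift m i) (lshift m j)) \o shift 0) (h *: z)
           - pi 0 (lshift m i) (lshift m j))) @ 0^' --> 'D_z (fun t => pi t (lshift m i) (lshift m j)) 0 := dF.
    move: dF'; rewrite DF.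
    have -> : (fun h : R => h^-1 *: (((fun t => pi t (lshift m i) (lshift m j)) \o shift 0) (h *: z)
           - pi 0 (lshift m i) (lshift m j))) = (fun h : R => h^-1 * psi h).
      by apply/funext => h /=; rewrite addr0 -/(F 0) F0 subr0.
    by [].
  have := @additive_zero R psi padd Q.
  by rewrite /psi scale1r.
have [U1 r10 _ _] := rep1.
have [_ r20 _ _] := rep2.
have lineH : forall h : 'cV[R]_n, F (col_mx h 0) = 0.
  move=> h; apply: line => s t.
  rewrite !scale_col_mx !scaler0 /gmul !col_mxKu !col_mxKd !mulmx0 addr0.
  by rewrite scalerDl.
have lineV : forall w : 'cV[R]_m, F (col_mx 0 w) = 0.
  move=> w; apply: line => s t.
  rewrite !scale_col_mx !scaler0 /gmul !col_mxKu !col_mxKd addr0 r10 r20 invmx1 !mul1mx.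
  by rewrite scalerDl addrC.
have -> : x = gmul rho1 rho2 (col_mx (usubmx x) 0) (col_mx 0 (invmx (rho1 (usubmx x)) *m dsubmx x)).
  rewrite /gmul !col_mxKu !col_mxKd addr0 mulmx0 addr0 mulmxA mulmxV ?U1 // mul1mx.
  by rewrite vsubmxK.
by rewrite -/(F _) Fadd lineH lineV addr0.
Qed.


Lemma hcoord_derive (R : realType) n m (xi : 'rV[R]_n) (x v : 'cV[R]_(n + m)) :
  'D_v (@hcoord R n m xi) x = hcoord xi v.
Proof.
have HL : forall (h : R) (a b : 'cV[R]_(n + m)),
    xi *m usubmx (h *: a + b) = h *: (xi *m usubmx a) + xi *m usubmx b.
  by move=> h a b; rewrite usub_lin mulmxDr scalemxAr.
exact: (@coord_derive R _ 1 1 (fun t : 'cV[R]_(n + m) => xi *m usubmx t) HL 0 0 x v).2.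
Qed.

Lemma hcoord_evec_l (R : realType) n m (xi : 'rV[R]_n) (i : 'I_n) :
  @hcoord R n m xi (evec (lshift m i)) = xi 0 i.
Proof.
rewrite /hcoord /evec mxE (bigD1 i) //= big1 => [|k /negbTE ki].
  by rewrite !mxE eqxx mulr1 addr0.
by rewrite !mxE eq_lshift ki mulr0.
Qed.

Lemma hcoord_evec_r (R : realType) n m (xi : 'rV[R]_n) (l : 'I_m) :
  @hcoord R n m xi (evec (rshift n l)) = 0.
Proof.
rewrite /hcoord /evec mxE big1 // => k _.
by rewrite !mxE eq_lrshift mulr0.
Qed.

Theorem lemma1 (R : realType) (n m : nat)
  (rho1 rho2 : 'cV[R]_n -> 'M[R]_m)
  (rep1 : is_rep rho1) (rep2 : is_rep rho2)
  (comm : forall h h', rho1 h *m rho2 h' = rho2 h' *m rho1 h)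
  (delta : 'cV[R]_(n + m) -> 'M[R]_(n + m))
  (bialg : lie_bialgebra (gmul rho1 rho2) delta)
  (Habelian : forall xi eta : 'rV[R]_n,
      cobr delta (Hcovec m xi) (Hcovec m eta) = 0)
  (pi : 'cV[R]_(n + m) -> 'M[R]_(n + m))
  (Hpoisson : poisson_bivector pi)
  (Hmult : pl_multiplicative (gmul rho1 rho2) pi)
  (Hlin : forall X, 'D_X pi 0 = delta X) :
  forall xi eta : 'rV[R]_n,
    pbr pi (@hcoord R n m xi) (@hcoord R n m eta) = fun _ => 0.
Proof.
move=> xi eta; apply/funext => x.
have [dlin _ _ _] := bialg.
have [spi _ _] := Hpoisson.
rewrite /pbr big1 // => k _; apply: big1 => l _.
rewrite !hcoord_derive.
case: (split_ordP k) => [k' ->|k' ->]; last by rewrite hcoord_evec_r !mul0r.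
case: (split_ordP l) => [l' ->|l' ->]; last by rewrite hcoord_evec_r mulr0.
by rewrite (@piHH R n m rho1 rho2 rep1 rep2 delta dlin Habelian pi spi Hmult Hlin) mulr0 mul0r.
Qed.
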